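(* (a) Let $M\subset\mathcal P(\Omega_1)$, $N\subset\mathcal P(\Omega_2)$ be submanifolds and $\varphi:M\to N$, $\psi:N\to M$ Markov maps with $\psi\circ\varphi=\mathrm{id}_M$. Let $p\in M$, $q\in N$ with $q=\varphi(p)$ and $p=\psi(q)$. Then $\psi^*_q:T_p^*(M)\to T^*_q(N)$ is an isometry for the Fisher co-metrics: $g_{M,p}(\alpha_p,\beta_p)=g_{N,q}(\psi^*_q\alpha_p,\psi^*_q\beta_p)$ for all $\alpha_p,\beta_p\in T^*_p(M)$. (b) For every Markov co-embedding $\Psi:\mathcal P(\Omega_2)\to\mathcal P(\Omega_1)$, every $q\in\mathcal P(\Omega_2)$ (not only $q$ in the image of a given embedding) and all $\alpha,\beta\in T^*_{\Psi(q)}(\mathcal P(\Omega_1))$: $g_{\Psi(q)}(\alpha,\beta)=g_q(\Psi^*_q\alpha,\Psi_q^*\beta)$.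
   Context: For a finite set $\Omega$, $\mathcal P(\Omega)$ is the manifold of strictly positive probability distributions. A Markov map $\mathcal P(\Omega_1)\to\mathcal P(\Omega_2)$ is a map $p\mapsto\sum_xW(\cdot|x)p(x)$ for a surjective channel $W$ (equivalently an affine map between these sets); a Markov map between submanifolds $M\to N$ is the restriction of such a map. A Markov map $\Phi:\mathcal P(\Omega_1)\to\mathcal P(\Omega_2)$ is a Markov embedding if some Markov map $\Psi:\mathcal P(\Omega_2)\to\mathcal P(\Omega_1)$ satisfies $\Psi\circ\Phi=\mathrm{id}$; such $\Psi$ is called a Markov co-embedding. $\psi^*_q$ denotes the transpose of $(d\psi)_q:T_q(N)\to T_p(M)$. The Fisher metric is $g_p(X,Y)=\sum_\omega X^{(m)}(\omega)Y^{(m)}(\omega)/p(\omega)$ (m-representations); $g_M,g_N$ are its restrictions to $M,N$, and the same symbols denote the dual inner products (Fisher co-metrics) on cotangent spaces. On $\mathcal P(\Omega)$ the Fisher co-metric satisfies $g_p((d\langle A\rangle)_p,(d\langle B\rangle)_p)=\mathrm{Cov}_p(A,B)$. *)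

(* Defs.v *)
From HB Require Import structures.
From mathcomp Require Import all_boot all_order all_algebra.
From mathcomp Require Import all_classical all_reals all_analysis.
Set Implicit Arguments. Unset Strict Implicit. Unset Printing Implicit Defensive.
Import Order.TTheory GRing.Theory Num.Theory.
Import numFieldNormedType.Exports.
Local Open Scope classical_set_scope.
Local Open Scope ring_scope.

(* Finite set Omega = 'I_n; distributions / tangent vectors (m-representation)
   are row vectors 'rV[R]_n, p 0 i = p(i). *)

Section Defs.
Variable R : realType.

Definition Pdist (n : nat) : set 'rV[R]_n :=
  [set p | (forall i, 0 < p 0 i) /\ \sum_i p 0 i = 1].
Arguments Pdist n : clear implicits.

(* W x y = W(y|x); surjective channel: every output has positive probability
   from some input (so that the Markov map sends P(Omega1) into P(Omega2)). *)
Definition surj_channel (n1 n2 : nat) (W : 'M[R]_(n1, n2)) : Prop :=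
  [/\ (forall x y, 0 <= W x y), (forall x, \sum_y W x y = 1)
    & (forall y, exists x, 0 < W x y)].

Definition markov_map (n1 n2 : nat) (W : 'M[R]_(n1, n2)) (p : 'rV[R]_n1) :
  'rV[R]_n2 := p *m W.

Definition iterD {V W : normedModType R} (vs : seq V) (f : V -> W) : V -> W :=
  foldr (fun v g => fun x => derive g x v) f vs.

Definition smooth_on {V W : normedModType R} (U : set V) (f : V -> W) : Prop :=
  forall (vs : seq V) (x : V), U x ->
    {for x, continuous (iterD vs f)} /\ (forall v, derivable (iterD vs f) x v).

Definition slice (n d : nat) : set 'rV[R]_n :=
  [set x | forall i : 'I_n, (d <= i)%N -> x 0 i = 0].
Arguments slice n d : clear implicits.

Definition submanifold (n : nat) (M : set 'rV[R]_n) : Prop :=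
  M `<=` Pdist n /\
  forall p, M p -> exists (U : set 'rV[R]_n) (d : nat)
                          (Phi Phiinv : 'rV[R]_n -> 'rV[R]_n),
    [/\ open U /\ U p, smooth_on U Phi, open (Phi @` U),
        smooth_on (Phi @` U) Phiinv
      & (forall x, U x -> Phiinv (Phi x) = x /\ (M x <-> slice n d (Phi x)))].

Definition tangentSpace (n : nat) (M : set 'rV[R]_n) (p : 'rV[R]_n) :
  set 'rV[R]_n :=
  [set X | exists (gam : R^o -> 'rV[R]_n) (e : R),
     [/\ 0 < e, smooth_on `]-e, e[ gam, gam 0 = p,
         (forall t, -e < t < e -> M (gam t)) & derive gam 0 1 = X]].

Definition fisher (n : nat) (p X Y : 'rV[R]_n) : R :=
  \sum_i X 0 i * Y 0 i / p 0 i.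

(* A cotangent vector on the tangent space T: a function linear on T
   (only its values on T matter). *)
Definition is_covector (n : nat) (T : set 'rV[R]_n) (a : 'rV[R]_n -> R) : Prop :=
  forall (c : R) X Y, T X -> T Y -> a (c *: X + Y) = c * a X + a Y.

Definition sharp (n : nat) (T : set 'rV[R]_n) (p : 'rV[R]_n)
  (a : 'rV[R]_n -> R) : 'rV[R]_n :=
  xget 0 [set u | T u /\ forall X, T X -> fisher p u X = a X].

Definition cometric (n : nat) (T : set 'rV[R]_n) (p : 'rV[R]_n)
  (a b : 'rV[R]_n -> R) : R :=
  fisher p (sharp T p a) (sharp T p b).

(* Transpose of the differential of the Markov map of V (X |-> X V):
   psi^* alpha = alpha o d psi. *)
Definition pullback (n2 n1 : nat) (V : 'M[R]_(n2, n1)) (a : 'rV[R]_n1 -> R) :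
  'rV[R]_n2 -> R := fun Y => a (Y *m V).

End Defs.
Arguments Pdist {R} n.
Arguments slice {R} n d.

(* Main.v *)
Require Import Defs.
From HB Require Import structures.
From mathcomp Require Import all_boot all_order all_algebra.
From mathcomp Require Import all_classical all_reals all_analysis.
From mathcomp Require Import ring lra.
Import Order.TTheory GRing.Theory Num.Theory.
Local Open Scope classical_set_scope.
Local Open Scope ring_scope.

Set Implicit Arguments. Unset Strict Implicit.
Local Notation iterD := Defs.iterD.
Section S.
Variable R : realType.

Lemma mulmx_entry_fun n1 n2 (g : R^o -> 'rV[R]_n1) (W : 'M[R]_(n1, n2)) i j :
  (fun t => (g t *m W) i j) = \sum_(k < n1) (W k j \*: (fun t => g t i k)).
Proof.
rewrite fct_sumE; apply/funext => t /=; rewrite mxE.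
by apply: eq_bigr => k _; rewrite mulrC.
Qed.

Lemma is_derive_mulmx n1 n2 (g : R^o -> 'rV[R]_n1) (W : 'M[R]_(n1, n2)) x v :
  derivable g x v -> is_derive x v (fun t => g t *m W) ('D_v g x *m W).
Proof.
move=> dg; have dge := derivable_mxP g x v; have [dgij _] := dge.
have dij := dgij dg.
have H : forall i j, is_derive x v (fun t => (g t *m W) i j)
     (\sum_(k < n1) W k j *: 'D_v (fun t => g t i k) x).
  move=> i j; rewrite mulmx_entry_fun; apply: is_derive_sum => k.
  apply: is_deriveZ; exact: derivableP.
have dG : derivable (fun t => g t *m W) x v.
  by apply/derivable_mxP => i j; have [] := H i j.
apply: DeriveDef => //.
rewrite derive_mx //; apply/matrixP => i j; rewrite mxE.
have [_ ->] := H i j.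
rewrite (derive_mx dg) mxE; apply: eq_bigr => k _; rewrite mxE mulrC //.
Qed.

Lemma iterD_mulmx n1 n2 (U : set R^o) (g : R^o -> 'rV[R]_n1) (A : 'M[R]_(n1, n2)) :
  open U -> smooth_on U g ->
  forall vs x, U x -> iterD vs (fun t => g t *m A) x = iterD vs g x *m A.
Proof.
move=> oU sg; elim=> [//|v vs IH] x Ux /=.
have nU : nbhs x U by rewrite openE in oU; exact: oU.
have -> : 'D_v (iterD vs (fun t => g t *m A)) x =
          'D_v (fun y => iterD vs g y *m A) x.
  by apply: near_eq_derive; near=> y; apply: IH; near: y.
have [_ dg] := sg vs x Ux.
by have [_ ->] := @is_derive_mulmx _ _ _ A _ _ (dg v).
Unshelve. all: by end_near.
Qed.

Lemma smooth_mulmx n1 n2 (U : set R^o) (g : R^o -> 'rV[R]_n1) (A : 'M[R]_(n1, n2)) :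
  open U -> smooth_on U g -> smooth_on U (fun t => g t *m A).
Proof.
move=> oU sg vs x Ux.
have nU : nbhs x U by rewrite openE in oU; exact: oU.
have ne : {near x, (fun y => iterD vs g y *m A) =1 iterD vs (fun t => g t *m A)}.
  by near=> y; rewrite (@iterD_mulmx _ _ _ _ _ oU sg) //; near: y.
have [_ dg] := sg vs x Ux.
have dv : forall v, derivable (iterD vs (fun t => g t *m A)) x v.
  move=> v; apply: (near_eq_derivable ne).
  by have [] := @is_derive_mulmx _ _ _ A _ _ (dg v).
split=> //.
apply: differentiable_continuous; apply/derivable1_diffP; exact: dv.
Unshelve. all: by end_near.
Qed.

Lemma tangent_push n1 n2 (M : set 'rV[R]_n1) (N : set 'rV[R]_n2) (A : 'M[R]_(n1, n2)) p X :
  tangentSpace M p X -> (forall z, M z -> N (z *m A)) ->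
  tangentSpace N (p *m A) (X *m A).
Proof.
move=> [gam [e [e0 sg g0 Mg dX]]] MN.
exists (fun t => gam t *m A), e; split => //.
- apply: smooth_mulmx sg; exact: interval_open.

- by rewrite g0.
- by move=> t /Mg /MN.
- have I0 : `]-e, e[%classic (0 : R^o).
    by rewrite /= in_itv /= oppr_lt0 e0.
  have [_ dg] := sg [::] 0 I0.
  by have [_ ->] := @is_derive_mulmx _ _ _ A _ _ (dg 1); rewrite dX.
Qed.

Lemma tangent_fix n (M : set 'rV[R]_n) (A : 'M[R]_(n, n)) p X :
  tangentSpace M p X -> (forall z, M z -> z *m A = z) -> X *m A = X.
Proof.
move=> [gam [e [e0 sg g0 Mg dX]]] MA.
have I0 : `]-e, e[%classic (0 : R^o) by rewrite /= in_itv /= oppr_lt0 e0.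
have [_ dg] := sg [::] 0 I0.
have dg1 : derivable gam 0 1 := dg 1.
rewrite -dX; have [_ <-] := @is_derive_mulmx _ _ _ A _ _ dg1.
apply: near_eq_derive.
have nU : nbhs (0 : R^o) `]-e, e[%classic.
  have oU : open (`]-e, e[%classic : set R^o) by exact: interval_open.
  by rewrite openE in oU; exact: oU.
near=> t; apply: MA; apply: Mg.
have : `]-e, e[%classic (t : R^o) by near: t.
by rewrite /= in_itv.
Unshelve. all: by end_near.
Qed.

Lemma fisherC n (p X Y : 'rV[R]_n) : fisher p X Y = fisher p Y X.
Proof. by apply: eq_bigr => i _; rewrite (mulrC (X 0 i)). Qed.

Lemma fisherBl n (p X Y Z : 'rV[R]_n) :
  fisher p (X - Y) Z = fisher p X Z - fisher p Y Z.
Proof.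
rewrite /fisher -sumrB; apply: eq_bigr => i _; rewrite !mxE.
by rewrite mulrBl mulrBl.
Qed.

Lemma fisher0l n (p Y : 'rV[R]_n) : fisher p 0 Y = 0.
Proof. by rewrite /fisher big1 // => i _; rewrite mxE !mul0r. Qed.

Lemma fisher0r n (p Y : 'rV[R]_n) : fisher p Y 0 = 0.
Proof. by rewrite fisherC fisher0l. Qed.

Lemma fisher_eq0 n (p X : 'rV[R]_n) : (forall i, 0 < p 0 i) ->
  fisher p X X = 0 -> X = 0.
Proof.
move=> pp /eqP; rewrite psumr_eq0; last first.
  by move=> i _; apply: divr_ge0; [rewrite -expr2 sqr_ge0 | exact: ltW].
move=> /allP H; apply/rowP => i; rewrite mxE.
have := H i (mem_index_enum i).
by rewrite mulf_eq0 invr_eq0 (gt_eqF (pp i)) orbF mulf_eq0 orbb => /eqP.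
Qed.

Definition Sset n (T : set 'rV[R]_n) (p : 'rV[R]_n) (a : 'rV[R]_n -> R) :=
  [set u | T u /\ forall X, T X -> fisher p u X = a X].

Lemma Sset_uniq n (T : set 'rV[R]_n) (p u u' : 'rV[R]_n) a : (forall i, 0 < p 0 i) ->
  Sset T p a u -> Sset T p a u' -> u = u'.
Proof.
move=> pp [Tu Hu] [Tu' Hu'].
apply/eqP; rewrite -subr_eq0; apply/eqP; apply: (fisher_eq0 pp).
rewrite fisherBl (fisherC p u) (fisherC p u') !fisherBl.
by rewrite (Hu u) // (Hu u') // (Hu' u) // (Hu' u') // !subrr ?subr0.
Qed.

Lemma sharp_spec n (T : set 'rV[R]_n) (p : 'rV[R]_n) a : (forall i, 0 < p 0 i) ->
  (Sset T p a (sharp T p a) /\ forall u, Sset T p a u -> u = sharp T p a) \/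
  ((forall u, ~ Sset T p a u) /\ sharp T p a = 0).
Proof.
move=> pp; have [[u Su]|nS] := pselect (exists u, Sset T p a u).
  left; have E : sharp T p a = u.
    by apply: xget_unique => // y Sy; exact: (Sset_uniq pp Sy Su).
  by rewrite E; split => // u' Su'; exact: (Sset_uniq pp Su' Su).
right; split; first by move=> u Su; apply: nS; exists u.
by apply: xgetPN => u Su; apply: nS; exists u.
Qed.

Lemma cometric_transfer n1 n2 (TM : set 'rV[R]_n1) (TN : set 'rV[R]_n2) (p : 'rV[R]_n1) (q : 'rV[R]_n2)
  (F : 'M[R]_(n1, n2)) (G : 'M[R]_(n2, n1)) (a b : 'rV[R]_n1 -> R) :
  (forall i, 0 < p 0 i) -> (forall i, 0 < q 0 i) ->
  (forall u, TM u -> TN (u *m F)) -> (forall Y, TN Y -> TM (Y *m G)) ->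
  (forall u Y, TM u -> TN Y -> fisher q (u *m F) Y = fisher p u (Y *m G)) ->
  (forall u, TM u -> u *m F *m G = u) ->
  cometric TM p a b = cometric TN q (pullback G a) (pullback G b).
Proof.
move=> pp qq TF TG iso FG.
have key : forall c, (Sset TM p c (sharp TM p c) \/ sharp TM p c = 0) /\
    sharp TN q (pullback G c) = sharp TM p c *m F.
  move=> c; have [[Sc _]|[nS ->]] := sharp_spec TM c pp.
    split; first by left.
    have [[Sd Ud]|[nSd _]] := sharp_spec TN (pullback G c) qq.
      apply/esym/Ud; split; first by apply: TF; case: Sc.
      move=> Y TY; rewrite iso //; last by case: Sc.
      by case: Sc => _ ->; [|apply: TG].
    exfalso; apply: (nSd (sharp TM p c *m F)); split; first by apply: TF; case: Sc.
    move=> Y TY; rewrite iso //; last by case: Sc.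
    by case: Sc => _ ->; [|apply: TG].
  split; first by right.
  have [[[TS HS] _]|[_ ->]] := sharp_spec TN (pullback G c) qq; last by rewrite mul0mx.
  exfalso; apply: (nS (sharp TN q (pullback G c) *m G)); split; first exact: TG.
  move=> X TX; rewrite fisherC -iso //.
  by rewrite fisherC HS //; [rewrite /pullback FG | apply: TF].
rewrite /cometric; have [[Ha|Ha] ->] := key a; have [[Hb|Hb] ->] := key b.
- case: Ha => TA _; case: Hb => TB _.
  by rewrite iso // ?FG //; apply: TF.
- by rewrite Hb mul0mx !fisher0r.
- by rewrite Ha mul0mx !fisher0l.
- by rewrite Ha mul0mx !fisher0l.
Qed.

Lemma eqle (x y : R) : x = y -> x <= y. Proof. by move=> ->. Qed.

Lemma quad0 (B C : R) : 0 <= C -> (forall t, 0 <= 2 * t * B + t ^+ 2 * C) -> B = 0.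
Proof.
move=> C0 H.
have C1 : 0 < C + 1 by lra.
have := H (- B / (C + 1)).
set t := - B / (C + 1) => Ht.
have ht : t * (C + 1) = - B by rewrite /t mulrVK // unitfE gt_eqF.
have : 0 <= (2 * t * B + t ^+ 2 * C) * (C + 1) ^+ 2 by apply: mulr_ge0 => //; exact: sqr_ge0.
have -> : (2 * t * B + t ^+ 2 * C) * (C + 1) ^+ 2 = - B ^+ 2 * (C + 2).
  have -> : (2 * t * B + t ^+ 2 * C) * (C + 1) ^+ 2 = 2 * (t * (C+1)) * B * (C + 1) + (t * (C + 1))^+2 * C by ring.
  rewrite ht; ring.
move=> h; apply/eqP; rewrite -sqrf_eq0 eq_le sqr_ge0 andbT.
nra.
Qed.

Lemma fisher_expand n (p X Y : 'rV[R]_n) (t : R) :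
  fisher p (X + t *: Y) (X + t *: Y) =
  fisher p X X + 2 * t * fisher p X Y + t ^+ 2 * fisher p Y Y.
Proof.
rewrite /fisher !mulr_sumr -!big_split /=; apply: eq_bigr => i _; rewrite !mxE.
ring.
Qed.

Lemma cs_weighted n (w a b : 'I_n -> R) : (forall y, 0 <= w y) -> (forall y, 0 < b y) ->
  0 < \sum_y w y * b y ->
  (\sum_y a y * w y) ^+ 2 / (\sum_y w y * b y) <= \sum_y a y ^+ 2 * w y / b y.
Proof.
move=> w0 b0; set S0 := \sum_y w y * b y; set S1 := \sum_y a y * w y;
  set S2 := \sum_y a y ^+ 2 * w y / b y => S00.
set c := S1 / S0.
have H : 0 <= \sum_y w y * (a y - c * b y) ^+ 2 / b y.
  apply: sumr_ge0 => y _; apply: divr_ge0; last exact: ltW.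
  by apply: mulr_ge0 => //; exact: sqr_ge0.
have E : \sum_y w y * (a y - c * b y) ^+ 2 / b y = S2 - 2 * c * S1 + c ^+ 2 * S0.
  rewrite /S2 /S1 /S0 !mulr_sumr -sumrB -big_split /=; apply: eq_bigr => y _.
  have := b0 y; move: (b y) => by' hb; field; exact: lt0r_neq0.
rewrite E in H.
have hc : c * S0 = S1 by rewrite /c mulrVK // unitfE gt_eqF.
rewrite ler_pdivrMr //.
have : 0 <= (S2 - 2 * c * S1 + c ^+ 2 * S0) * S0 by apply: mulr_ge0 => //; exact: ltW.
have -> : (S2 - 2 * c * S1 + c ^+ 2 * S0) * S0 = S2 * S0 - 2 * (c * S0) * S1 + (c * S0) ^+ 2 by ring.
rewrite hc; lra.
Qed.

Lemma contraction n1 n2 (p : 'rV[R]_n1) (q : 'rV[R]_n2) (V : 'M[R]_(n2, n1)) (Z : 'rV[R]_n2) :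
  (forall y x, 0 <= V y x) -> (forall y, \sum_x V y x = 1) ->
  (forall y, 0 < q 0 y) -> (forall x, 0 < p 0 x) -> p = q *m V ->
  fisher p (Z *m V) (Z *m V) <= fisher q Z Z.
Proof.
move=> V0 V1 q0 p0 pE.
apply: (@le_trans _ _ (\sum_x \sum_y Z 0 y ^+ 2 * V y x / q 0 y)).
  apply: ler_sum => x _.
  have px : p 0 x = \sum_y V y x * q 0 y.
    by rewrite pE mxE; apply: eq_bigr => y _; rewrite mulrC.
  have Zx : (Z *m V) 0 x = \sum_y Z 0 y * V y x by rewrite mxE.
  rewrite Zx px -expr2.
  apply: (@cs_weighted _ (fun y => V y x) (fun y => Z 0 y) (fun y => q 0 y)) => //.
  by rewrite -px.
rewrite exchange_big /=; apply: ler_sum => y _.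
rewrite -[leRHS]mulr1 -(V1 y) mulr_sumr; apply/eqle/eq_bigr => x _.
by rewrite expr2; ring.
Qed.

Lemma fisher_iso n1 n2 (p : 'rV[R]_n1) (q : 'rV[R]_n2) (W : 'M[R]_(n1, n2))
  (V : 'M[R]_(n2, n1)) (u : 'rV[R]_n1) :
  (forall x y, 0 <= W x y) -> (forall x, \sum_y W x y = 1) ->
  (forall y x, 0 <= V y x) -> (forall y, \sum_x V y x = 1) ->
  (forall y, 0 < q 0 y) -> (forall x, 0 < p 0 x) ->
  q = p *m W -> p = q *m V -> u *m W *m V = u ->
  forall Y : 'rV[R]_n2, fisher q (u *m W) Y = fisher p u (Y *m V).
Proof.
move=> W0 W1 V0 V1 q0 p0 qE pE uWV Y'.
have c1 := contraction (u *m W) V0 V1 q0 p0 pE.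
have c2 := contraction u W0 W1 p0 q0 qE.
rewrite uWV in c1.
have eq0 : fisher q (u *m W) (u *m W) = fisher p u u by apply/eqP; rewrite eq_le c2 c1.
have cY := contraction Y' V0 V1 q0 p0 pE.
apply/eqP; rewrite -subr_eq0; apply/eqP.
apply: (@quad0 _ (fisher q Y' Y' - fisher p (Y' *m V) (Y' *m V))); first by rewrite subr_ge0.
move=> t.
have := contraction (u *m W + t *: Y') V0 V1 q0 p0 pE.
rewrite mulmxDl -scalemxAl uWV !fisher_expand eq0.
rewrite -subr_ge0 => h; apply: (le_trans h); apply/eqle.
ring.
Qed.

Lemma le_sum_term n (f : 'I_n -> R) i : (forall j, 0 <= f j) -> f i <= \sum_j f j.
Proof.
move=> f0; rewrite (bigD1 i) //= lerDl; exact: sumr_ge0.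
Qed.

Lemma sum_pos_term n (f : 'I_n -> R) i : (forall j, 0 <= f j) -> 0 < f i -> 0 < \sum_j f j.
Proof. move=> f0 fi; exact: (lt_le_trans fi (le_sum_term i f0)). Qed.

Lemma sum_gt0_ex n (f : 'I_n -> R) : (forall j, 0 <= f j) -> 0 < \sum_j f j ->
  exists i, 0 < f i.
Proof.
move=> f0 s0; apply/not_existsP => H.
have : \sum_j f j = 0 by apply: big1 => j _; apply/eqP; rewrite eq_le f0 andbT leNgt; apply/negP => /(H j).
by move=> e; rewrite e ltxx in s0.
Qed.

Lemma sum_eq0_each n (f : 'I_n -> R) i : (forall j, 0 <= f j) -> \sum_j f j = 0 -> f i = 0.
Proof.
move=> f0 s0; apply/eqP; rewrite eq_le f0 andbT -s0; exact: le_sum_term.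
Qed.

Lemma Pdist_push n1 n2 (V : 'M[R]_(n2, n1)) z : surj_channel V -> Pdist n2 z ->
  Pdist n1 (z *m V).
Proof.
move=> [V0 V1 V2] [z0 z1]; split.
  move=> x; have [y Vy] := V2 x; rewrite mxE.
  apply: (@sum_pos_term _ (fun y => z 0 y * V y x) y) => [j|].
    by apply: mulr_ge0 => //; exact: ltW.
  exact: mulr_gt0.
under eq_bigr do rewrite mxE.
rewrite exchange_big /= -z1; apply: eq_bigr => y _.
by rewrite -mulr_sumr V1 mulr1.
Qed.

Definition bayes n1 n2 (V : 'M[R]_(n2, n1)) (q : 'rV[R]_n2) : 'M[R]_(n1, n2) :=
  \matrix_(x, y) (V y x * q 0 y / (q *m V) 0 x).

Section Bayes.
Variables (n1 n2 : nat) (V : 'M[R]_(n2, n1)) (q : 'rV[R]_n2).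
Hypotheses (sV : surj_channel V) (Pq : Pdist n2 q).
Let p := q *m V.
Let pP : Pdist n1 p := Pdist_push sV Pq.
Let pp : forall x, 0 < p 0 x. Proof. by case: pP. Qed.
Let qq : forall y, 0 < q 0 y. Proof. by case: Pq. Qed.
Let pE x : p 0 x = \sum_y q 0 y * V y x. Proof. by rewrite /p mxE. Qed.

Lemma bayes_pdist z : Pdist n1 z -> Pdist n2 (z *m bayes V q).
Proof.
case: sV => V0 V1 V2; move=> [z0 z1]; split.
  move=> y; rewrite mxE.
  have [x Vx] : exists x, 0 < V y x by apply: sum_gt0_ex => //; rewrite V1.
  apply: (@sum_pos_term _ _ x) => [j|]; rewrite mxE.
    apply: mulr_ge0; [exact: ltW|]; apply: divr_ge0; [apply: mulr_ge0 => //|]; exact: ltW.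
  apply: mulr_gt0 => //; apply: divr_gt0 => //; exact: mulr_gt0.
under eq_bigr do rewrite mxE.
rewrite exchange_big /= -z1; apply: eq_bigr => x _.
under eq_bigr do rewrite mxE.
rewrite -mulr_sumr -mulr_suml.
have -> : \sum_y V y x * q 0 y = p 0 x by rewrite pE; apply: eq_bigr => y _; rewrite mulrC.
by rewrite divff ?mulr1 // gt_eqF.
Qed.

Lemma bayes_p : p *m bayes V q = q.
Proof.
apply/rowP => y; rewrite mxE.
under eq_bigr do rewrite mxE.
rewrite -[RHS]mul1r; case: sV => _ V1 _; rewrite -(V1 y) mulr_suml.
apply: eq_bigr => x _; rewrite /bayes mxE; have := pp x; rewrite /p mxE => hp; field; exact: lt0r_neq0.
Qed.

Lemma bayes_iso u Y : fisher q (u *m bayes V q) Y = fisher p u (Y *m V).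
Proof.
rewrite /fisher.
under eq_bigr do rewrite mxE mulr_suml mulr_suml.
under [RHS]eq_bigr do rewrite mxE mulr_sumr mulr_suml.
rewrite exchange_big /=; apply: eq_bigr => x _; apply: eq_bigr => y _.
rewrite mxE -/p; have := qq y; have := pp x.
move: (q 0 y) (p 0 x) => qy px hp hq; field.
by rewrite lt0r_neq0 // lt0r_neq0.
Qed.

Lemma bayes_fix (Vd : forall y x x', V y x * V y x' = (x == x')%:R * V y x) (u : 'rV[R]_n1) :
  u *m bayes V q *m V = u.
Proof.
apply/rowP => x'; rewrite !mxE.
under eq_bigr do rewrite mxE mulr_suml.
rewrite exchange_big (bigD1 x') //= [X in _ + X]big1 ?addr0; last first.
  move=> x /negbTE nx; apply: big1 => y _; rewrite mxE.
  have := Vd y x x'; rewrite nx mul0r => h.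
  have -> : u 0 x * (V y x * q 0 y / p 0 x) * V y x' =
            u 0 x * q 0 y / p 0 x * (V y x * V y x') by ring.
  by rewrite h mulr0.
have -> : \sum_y u 0 x' * bayes V q x' y * V y x' = u 0 x' / p 0 x' * \sum_y q 0 y * V y x'.
  rewrite mulr_sumr; apply: eq_bigr => y _; rewrite mxE -/p.
  have := Vd y x' x'; rewrite eqxx mul1r => h.
  have -> : u 0 x' * (V y x' * q 0 y / p 0 x') * V y x' =
            u 0 x' * q 0 y / p 0 x' * (V y x' * V y x') by ring.
  by rewrite h; ring.
by rewrite -pE divfK // gt_eqF.
Qed.
End Bayes.


Lemma deterministic n1 n2 (W : 'M[R]_(n1, n2)) (V : 'M[R]_(n2, n1)) :
  surj_channel W -> surj_channel V ->
  (forall p, Pdist n1 p -> p *m W *m V = p) ->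
  forall y x x', V y x * V y x' = (x == x')%:R * V y x.
Proof.
move=> [W0 W1 W2] [V0 V1 V2] id.
have diag : forall x0, \sum_y W x0 y * V y x0 = 1.
  move=> x0.
  have n0 : (0 < n1)%N := leq_ltn_trans (leq0n _) (ltn_ord x0).
  have nR : (0 : R) < n1%:R by rewrite ltr0n.
  set u : 'rV[R]_n1 := const_mx (n1%:R^-1).
  set e : 'rV[R]_n1 := delta_mx 0 x0.
  have se : \sum_i e 0 i = 1.
    rewrite (bigD1 x0) //= big1 ?addr0; first by rewrite mxE !eqxx.
    by move=> i /negbTE ni; rewrite mxE ni andbF.
  have su : \sum_i u 0 i = 1.
    under eq_bigr do rewrite mxE.
    rewrite sumr_const card_ord.
    have -> : n1%:R^-1 *+ n1 = n1%:R^-1 * n1%:R :> R by rewrite mulr_natr.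
    by rewrite mulVf // gt_eqF.
  have Pu : Pdist n1 u by split => // i; rewrite mxE invr_gt0.
  have P2 : Pdist n1 (2^-1 *: (u + e)).
    split.
      move=> i; rewrite !mxE; apply: mulr_gt0; first by rewrite invr_gt0.
      have : 0 < n1%:R^-1 :> R by rewrite invr_gt0.
      by case: (_ && _) => /= h; lra.
    under eq_bigr do rewrite mxE [(u + e) _ _]mxE.
    by rewrite -mulr_sumr big_split /= su se; field.
  have he : e = 2 *: (2^-1 *: (u + e)) - u.
    by rewrite scalerA mulfV // scale1r (addrC u e) addrK.
  have E : e *m W *m V = e.
    move: P2 he; set w := 2^-1 *: (u + e) => P2 he; clearbody w.
    rewrite {1}he mulmxBl mulmxBl -!scalemxAl (id _ P2) (id _ Pu).
    by rewrite -he.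
  have : (row x0 (W *m V)) 0 x0 = 1 by rewrite rowE mulmxA E mxE !eqxx.
  by rewrite !mxE.
move=> y.
have [x0 Wx] := W2 y.
have Vle1 : forall y' x, V y' x <= 1.
  by move=> y' x; rewrite -(V1 y'); apply: le_sum_term.
have Vy1 : V y x0 = 1.
  have s0 : \sum_y' W x0 y' * (1 - V y' x0) = 0.
    under eq_bigr do rewrite mulrBr mulr1.
    by rewrite sumrB W1 diag subrr.
  have h0 : forall j, 0 <= W x0 j * (1 - V j x0).
    by move=> j; apply: mulr_ge0 => //; rewrite subr_ge0.
  move: (@sum_eq0_each _ (fun y' => W x0 y' * (1 - V y' x0)) y h0 s0) => /eqP.
  by rewrite mulf_eq0 (gt_eqF Wx) /= subr_eq0 => /eqP <-.
have Vz : forall x, x != x0 -> V y x = 0.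
  move=> x nx; have := V1 y; rewrite (bigD1 x0) //= (bigD1 x nx) /= Vy1.
  have : 0 <= \sum_(i | (i != x0) && (i != x)) V y i.
    by apply: sumr_ge0 => i _; exact: V0.
  have := V0 y x; lra.
move=> x x'.
case: (eqVneq x x0) => [->|nx]; last by rewrite (Vz x nx) !mul0r mulr0.
case: (eqVneq x' x0) => [->|nx']; first by rewrite Vy1 !mulr1.
by rewrite (Vz x' nx') mul0r mulr0.
Qed.
End S.

Theorem mainTheorem7 (R : realType) :
  (* (a) *)
  (forall (n1 n2 : nat) (M : set 'rV[R]_n1) (N : set 'rV[R]_n2)
          (W : 'M[R]_(n1, n2)) (V : 'M[R]_(n2, n1)),
     submanifold M -> submanifold N ->
     surj_channel W -> surj_channel V ->
     (forall p, M p -> N (markov_map W p)) ->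
     (forall q, N q -> M (markov_map V q)) ->
     (forall p, M p -> markov_map V (markov_map W p) = p) ->
     forall p q, M p -> N q -> q = markov_map W p -> p = markov_map V q ->
     forall a b : 'rV[R]_n1 -> R,
       is_covector (tangentSpace M p) a -> is_covector (tangentSpace M p) b ->
       cometric (tangentSpace M p) p a b =
       cometric (tangentSpace N q) q (pullback V a) (pullback V b)) /\
  (* (b) *)
  (forall (n1 n2 : nat) (V : 'M[R]_(n2, n1)),
     surj_channel V ->
     (exists W : 'M[R]_(n1, n2), surj_channel W /\
        forall p, Pdist n1 p -> markov_map V (markov_map W p) = p) ->
     forall q, Pdist n2 q ->
     forall a b : 'rV[R]_n1 -> R,
       is_covector (tangentSpace (Pdist n1) (markov_map V q)) a ->
       is_covector (tangentSpace (Pdist n1) (markov_map V q)) b ->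
       cometric (tangentSpace (Pdist n1) (markov_map V q)) (markov_map V q) a b =
       cometric (tangentSpace (Pdist n2) q) q (pullback V a) (pullback V b)).
Proof.
split.
- move=> n1 n2 M N W V sM sN sW sV MN NM idM p q Mp Nq qE pE a b _ _.
  have pp : forall i, 0 < p 0 i by case: (sM.1 p Mp).
  have qq : forall i, 0 < q 0 i by case: (sN.1 q Nq).
  have FG : forall u, tangentSpace M p u -> u *m W *m V = u.
    move=> u Tu; rewrite -mulmxA; apply: (tangent_fix Tu) => z Mz.
    rewrite mulmxA; exact: idM.
  case: sW => W0 W1 _; case: sV => V0 V1 _.
  apply: (cometric_transfer (F := W)) => //.
  + move=> u Tu; rewrite qE; apply: (tangent_push Tu) => z Mz; exact: MN.
  + move=> Y TY; rewrite pE; apply: (tangent_push TY) => z Nz; exact: NM.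
  + move=> u Y Tu _; exact: (fisher_iso W0 W1 V0 V1 qq pp qE pE (FG u Tu)).
- move=> n1 n2 V sV [W [sW idW]] q Pq a b _ _.
  have Vd := deterministic sW sV idW.
  have pP := Pdist_push sV Pq.
  apply: (cometric_transfer (F := bayes V q)).
  + by case: pP.
  + by case: Pq.
  + move=> u Tu; rewrite -[X in tangentSpace _ X](bayes_p sV Pq).
    apply: (tangent_push Tu) => z Pz; exact: bayes_pdist.
  + move=> Y TY; apply: (tangent_push TY) => z Pz; exact: Pdist_push.
  + move=> u Y _ _; exact: bayes_iso.
  + move=> u _; exact: bayes_fix.
Qed.
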